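(* Let $W$ be a polynomial, $\sigma>0$, and suppose $s$ with $\Re s<0$ is a quasinormal frequency in the sense of Leaver with $\sigma<(\Re\sqrt s)^2$, with corresponding nonzero solution $u(x)=\sum_{k\ge1}H_k(1-x)^k$. Then $u\in X^\sigma$. Consequently, if in addition $s\in\Omega_\sigma$, then $u$ is a nonzero element of $\mathcal D^\sigma$ with $\mathcal L_su=0$, i.e. $s$ is a quasinormal frequency in the sense that $\mathcal L_s:\mathcal D^\sigma\to Y^\sigma$ has nontrivial kernel.
   Context: For $|\arg z|<\pi$, $\sqrt z$ denotes the branch with $\Re\sqrt z>0$. $\mathcal L_su=\frac{d}{dx}(x^2\frac{du}{dx})+s\frac{du}{dx}-Wu$ on $I=(0,1)$. $s$ with $\Re s<0$ is a quasinormal frequency in the sense of Leaver if there is a solution $u$ of $\mathcal L_su=0$ of the form $u(x)=\sum_{k=1}^\infty H_k(1-x)^k$ with $\sup_k|H_ke^{2\sqrt{sk}}|<\infty$. For $\sigma>0$, $u\in C^\infty(\overline I)$, $k\in\{0,1,2\}$: $|u|^{0}_{\sigma,k,0}=\big(\sum_{n=0}^\infty\frac{\sigma^{2n}}{n!^2(n+1)!^2}n^{k}\int_0^1(x/\sigma)^k|\partial_x^nu|^2dx\big)^{1/2}$ (with $0^0:=1$), $\|u\|_{\sigma,0,0}=|u|^0_{\sigma,0,0}$, $[u]^0_\sigma=(\sum_{n=0}^\infty\frac{\sigma^{2n+1}}{n!^2(n+1)!^2}|u^{(n)}(0)|^2)^{1/2}$. $X^\sigma=\{u\in C^\infty(\overline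 I):u(1)=0,\ \|\partial_xu\|_{\sigma,0,0}+|\partial_xu|^0_{\sigma,1,0}+|\partial_xu|^0_{\sigma,2,0}+[\partial_xu]^0_\sigma<\infty\}$, $Y^\sigma=\{u\in C^\infty(\overline I):\|u\|_{\sigma,0,0}+|u|^0_{\sigma,1,0}+[u]^0_\sigma<\infty\}$, $\mathcal D^\sigma=\{u\in X^\sigma:\mathcal L_su\in Y^\sigma\}$. $\Omega^1_\sigma=\{s:\Re s\le0,\ \sigma<|\Im s|\}\cup\{s:\Re s>0,\ \sigma<|s|\}$; $\Omega^2_\sigma=\{s:\ \sigma<|s|+\Re s,\ \sigma>\frac{-\Re(s)|s|}{2(|s|+\Re s)}\}$; $\Omega^3_\sigma=\{s\neq0:\ \sigma(|s|-\sigma+\Re s)-(\sigma(1+\frac{\Re s}{|s|})+\frac12\Re s)^2>0\}$; $\Omega_\sigma=\Omega^1_\sigma\cap(\Omega^2_\sigma\cup\Omega^3_\sigma)$. *)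

(* Defs.v *)
From Stdlib Require Import Reals Lra List Arith Factorial.
Open Scope R_scope.

Definition Cpx : Type := (R * R)%type.
Definition Re (z : Cpx) : R := fst z.
Definition Im (z : Cpx) : R := snd z.
Definition C0 : Cpx := (0, 0).
Definition RtoC (x : R) : Cpx := (x, 0).
Definition Cadd (z w : Cpx) : Cpx := (Re z + Re w, Im z + Im w).
Definition Csub (z w : Cpx) : Cpx := (Re z - Re w, Im z - Im w).
Definition Cmul (z w : Cpx) : Cpx :=
  (Re z * Re w - Im z * Im w, Re z * Im w + Im z * Re w).
Definition Cnorm2 (z : Cpx) : R := Re z ^ 2 + Im z ^ 2.
Definition Cnorm (z : Cpx) : R := sqrt (Cnorm2 z).
Definition Cexp (z : Cpx) : Cpx := (exp (Re z) * cos (Im z), exp (Re z) * sin (Im z)).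
(** Principal square root: for |arg z| < pi, the branch with positive real part. *)
Definition Csqrt (z : Cpx) : Cpx :=
  (sqrt ((Cnorm z + Re z) / 2),
   (if Rlt_dec (Im z) 0 then -1 else 1) * sqrt ((Cnorm z - Re z) / 2)).

Fixpoint Peval (W : list Cpx) (x : R) : Cpx :=
  match W with
  | nil => C0
  | a :: W' => Cadd a (Cmul (RtoC x) (Peval W' x))
  end.

Definition Cseries (a : nat -> Cpx) (l : Cpx) : Prop :=
  infinite_sum (fun k => Re (a k)) (Re l) /\ infinite_sum (fun k => Im (a k)) (Im l).

Definition is_deriv01 (f : R -> Cpx) (x : R) (l : Cpx) : Prop :=
  forall eps, 0 < eps -> exists delta, 0 < delta /\
    forall h, h <> 0 -> 0 <= x + h <= 1 -> Rabs h < delta ->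
      Cnorm (Csub ((/ h) * Re (Csub (f (x + h)) (f x)),
                   (/ h) * Im (Csub (f (x + h)) (f x))) l) < eps.

(** [D] is the tower of derivatives of [u] on the closed interval [0,1]:
    D 0 = u and D (n+1) = (D n)' on [0,1].  Existence of such a tower is
    u \in Cpx^\infty(\bar I). *)
Definition smooth_tower (u : R -> Cpx) (D : nat -> R -> Cpx) : Prop :=
  (forall x, 0 <= x <= 1 -> D O x = u x) /\
  (forall n x, 0 <= x <= 1 -> is_deriv01 (D n) x (D (S n) x)).

Definition Cinf01 (u : R -> Cpx) : Prop := exists D, smooth_tower u D.

Definition int01 (g : R -> R) (v : R) : Prop :=
  exists pr : Riemann_integrable g 0 1, RiemannInt pr = v.

Definition wcoef (sigma : R) (n : nat) : R :=
  sigma ^ (2 * n) / ((INR (fact n)) ^ 2 * (INR (fact (S n))) ^ 2).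

Definition seminorm_finite (sigma : R) (k : nat) (D : nat -> R -> Cpx) : Prop :=
  exists (I : nat -> R) (M : R),
    (forall n, int01 (fun x => (x / sigma) ^ k * Cnorm2 (D n x)) (I n)) /\
    (forall N, sum_f_R0 (fun n => wcoef sigma n * INR n ^ k * I n) N <= M).

Definition bdry_finite (sigma : R) (D : nat -> R -> Cpx) : Prop :=
  exists M : R,
    forall N, sum_f_R0 (fun n => wcoef sigma n * sigma * Cnorm2 (D n 0)) N <= M.

(** u \in X^sigma, witnessed by its derivative tower D (so that D (S n) is the
    tower of \partial_x u). *)
Definition InX_tower (sigma : R) (u : R -> Cpx) (D : nat -> R -> Cpx) : Prop :=
  smooth_tower u D /\ u 1 = C0 /\
  seminorm_finite sigma 0 (fun n => D (S n)) /\
  seminorm_finite sigma 1 (fun n => D (S n)) /\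
  seminorm_finite sigma 2 (fun n => D (S n)) /\
  bdry_finite sigma (fun n => D (S n)).

Definition InX (sigma : R) (u : R -> Cpx) : Prop := exists D, InX_tower sigma u D.

Definition InY (sigma : R) (v : R -> Cpx) : Prop :=
  exists D, smooth_tower v D /\
    seminorm_finite sigma 0 D /\ seminorm_finite sigma 1 D /\ bdry_finite sigma D.

(** L_s u = (x^2 u')' + s u' - W u = x^2 u'' + (2x + s) u' - W u,
    computed from a derivative tower D of u. *)
Definition Lop (s : Cpx) (W : list Cpx) (D : nat -> R -> Cpx) (x : R) : Cpx :=
  Csub (Cadd (Cmul (RtoC (x ^ 2)) (D 2%nat x))
             (Cmul (Cadd (RtoC (2 * x)) s) (D 1%nat x)))
       (Cmul (Peval W x) (D O x)).

Definition solves_ODE (s : Cpx) (W : list Cpx) (u : R -> Cpx) : Prop :=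
  exists u1 u2 : R -> Cpx, forall x, 0 < x < 1 ->
    is_deriv01 u x (u1 x) /\ is_deriv01 u1 x (u2 x) /\
    Csub (Cadd (Cmul (RtoC (x ^ 2)) (u2 x)) (Cmul (Cadd (RtoC (2 * x)) s) (u1 x)))
         (Cmul (Peval W x) (u x)) = C0.

(** s (Re s < 0) is a quasinormal frequency in the sense of Leaver, with solution
    u(x) = sum_{k>=1} H_k (1-x)^k  (H 0 is unused), sup_k |H_k e^{2 sqrt(s k)}| < oo. *)
Definition Leaver_qnf (s : Cpx) (W : list Cpx) (u : R -> Cpx) (H : nat -> Cpx) : Prop :=
  Re s < 0 /\ Im s <> 0 /\
  solves_ODE s W u /\
  (forall x, 0 <= x <= 1 ->
     Cseries (fun k => Cmul (H (S k)) (RtoC ((1 - x) ^ (S k)))) (u x)) /\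
  (exists M, forall k, (1 <= k)%nat ->
     Cnorm (Cmul (H k) (Cexp (Cmul (RtoC 2) (Csqrt (Cmul s (RtoC (INR k))))))) <= M).

Definition Omega1 (sigma : R) (s : Cpx) : Prop :=
  (Re s <= 0 /\ sigma < Rabs (Im s)) \/ (0 < Re s /\ sigma < Cnorm s).
Definition Omega2 (sigma : R) (s : Cpx) : Prop :=
  sigma < Cnorm s + Re s /\
  sigma > - Re s * Cnorm s / (2 * (Cnorm s + Re s)).
Definition Omega3 (sigma : R) (s : Cpx) : Prop :=
  s <> C0 /\
  sigma * (Cnorm s - sigma + Re s) - (sigma * (1 + Re s / Cnorm s) + / 2 * Re s) ^ 2 > 0.
Definition Omega (sigma : R) (s : Cpx) : Prop :=
  Omega1 sigma s /\ (Omega2 sigma s \/ Omega3 sigma s).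

(* Main.v *)
From Stdlib Require Import Reals Lra Lia Factorial ZArith FunctionalExtensionality.
From Coquelicot Require Import Coquelicot.
Require Import Defs.
Open Scope R_scope.

Fixpoint ff (k n : nat) : R := match n with O => 1 | S n' => ff k n' * INR (k - n') end.
Definition P (n k : nat) (x : R) : R := (-1)^n * ff k n * (1-x)^(k-n).

Lemma ff_bound k n : 0 <= ff k n <= INR k ^ n.
Proof.
  induction n as [|n IH]; simpl. lra.
  assert (0 <= INR (k - n) <= INR k).
  { split. apply pos_INR. apply le_INR; lia. }
  split. apply Rmult_le_pos; lra.
  rewrite Rmult_comm. apply Rmult_le_compat; try lra.
Qed.

Lemma pow_01 y m : 0 <= y <= 1 -> 0 <= y ^ m <= 1.
Proof.
  intros Hy. induction m; simpl. lra.
  split. apply Rmult_le_pos; lra.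
  rewrite <- (Rmult_1_l 1). apply Rmult_le_compat; lra.
Qed.

Lemma taylor_pow y y' m : 0 <= y <= 1 -> 0 <= y' <= 1 ->
  Rabs (y'^m - y^m - INR m * y^(pred m) * (y'-y)) <= INR m ^ 2 * (y'-y)^2.
Proof.
  intros Hy Hy'. induction m as [|m IH].
  - simpl. replace (1-1-0*1*(y'-y)) with 0 by ring.
    rewrite Rabs_R0. lra.
  - destruct m as [|m].
    + simpl. match goal with |- Rabs ?e <= _ => replace e with 0 by ring end. rewrite Rabs_R0.
      match goal with |- 0 <= ?e => replace e with ((y'-y)^2) by ring end. apply pow2_ge_0.
    + set (d := y' - y) in *.
      replace (y' ^ S (S m) - y ^ S (S m) - INR (S (S m)) * y ^ pred (S (S m)) * d)
        with (y' * (y' ^ S m - y ^ S m - INR (S m) * y ^ pred (S m) * d) + INR (S m) * y^ m * d^2).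
      2:{ simpl pred. rewrite !S_INR. unfold d. simpl. ring. }
      eapply Rle_trans. apply Rabs_triang.
      rewrite Rabs_mult. 
      assert (H1 : Rabs (INR (S m) * y ^ m * d ^ 2) <= INR (S m) * d^2).
      { rewrite Rabs_pos_eq. 2:{ apply Rmult_le_pos. apply Rmult_le_pos. apply pos_INR. apply pow_01; lra. apply pow2_ge_0. }
        pose proof (pow_01 y m Hy). pose proof (pos_INR (S m)). pose proof (pow2_ge_0 d). 
        assert (0 <= INR (S m) * d^2) by (apply Rmult_le_pos; lra). nra. }
      assert (H2 : Rabs y' * Rabs (y' ^ S m - y ^ S m - INR (S m) * y ^ pred (S m) * d) <= INR (S m) ^ 2 * d ^ 2).
      { rewrite (Rabs_pos_eq y') by lra. pose proof (Rabs_pos (y' ^ S m - y ^ S m - INR (S m) * y ^ pred (S m) * d)).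
        nra. }
      rewrite (S_INR (S m)). pose proof (pos_INR (S m)). pose proof (pow2_ge_0 d). nra.
Qed.

Lemma Rabs_m1pow n : Rabs ((-1)^n) = 1.
Proof. rewrite <- RPow_abs. replace (Rabs (-1)) with 1. apply pow1. rewrite Rabs_left by lra. ring. Qed.

Lemma P_bound n k x : 0 <= x <= 1 -> Rabs (P n k x) <= INR k ^ n.
Proof.
  intros Hx. unfold P. rewrite !Rabs_mult, Rabs_m1pow.
  pose proof (ff_bound k n). pose proof (pow_01 (1-x) (k-n) ltac:(lra)).
  rewrite (Rabs_pos_eq (ff k n)) by lra. rewrite (Rabs_pos_eq ((1-x)^(k-n))) by lra.
  rewrite Rmult_1_l. rewrite <- (Rmult_1_r (INR k ^ n)). apply Rmult_le_compat; lra.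
Qed.

Lemma P_taylor n k x z : 0 <= x <= 1 -> 0 <= z <= 1 ->
  Rabs (P n k z - P n k x - (z - x) * P (S n) k x) <= (z - x)^2 * INR k ^ S (S n).
Proof.
  intros Hx Hz. unfold P.
  replace (k - S n)%nat with (pred (k - n)) by lia.
  simpl ff.
  replace ((-1) ^ n * ff k n * (1 - z) ^ (k - n) - (-1) ^ n * ff k n * (1 - x) ^ (k - n) -
     (z - x) * ((-1) ^ S n * (ff k n * INR (k - n)) * (1 - x) ^ pred (k - n)))
   with ((-1)^n * ff k n * ((1-z)^(k-n) - (1-x)^(k-n) - INR (k-n) * (1-x)^(pred (k-n)) * ((1-z) - (1-x)))) by (simpl; ring).
  rewrite !Rabs_mult, Rabs_m1pow, Rmult_1_l.
  pose proof (ff_bound k n).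
  rewrite (Rabs_pos_eq (ff k n)) by lra.
  pose proof (taylor_pow (1-x) (1-z) (k-n) ltac:(lra) ltac:(lra)).
  assert (INR (k-n) ^2 <= INR k ^ 2).
  { apply pow_incr. split. apply pos_INR. apply le_INR; lia. }
  replace ((1 - z - (1 - x)) ^ 2) with ((z-x)^2) in H0 by ring.
  replace ((z - x) ^ 2 * INR k ^ S (S n)) with (INR k ^ n * (INR k ^2 * (z-x)^2)) by (simpl; ring).
  apply Rmult_le_compat. lra. apply Rabs_pos. lra.
  eapply Rle_trans. exact H0. apply Rmult_le_compat_r. apply pow2_ge_0. lra.
Qed.

Definition T (c : nat -> R) n x k := c k * P n k x.
Definition F c n x := Series (T c n x).
Definition Sb (c : nat -> R) m := Series (fun k => Rabs (c k) * INR k ^ m).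
Definition good (c : nat -> R) := forall m, ex_series (fun k => Rabs (c k) * INR k ^ m).

Lemma norm_R (r : R) : norm r = Rabs r.
Proof. reflexivity. Qed.

Lemma ex_series_scal_R (r : R) a : ex_series a -> ex_series (fun k => r * a k).
Proof. intros H. apply (ex_series_scal_l r a H). Qed.

Lemma T_abs c n x k : 0 <= x <= 1 -> Rabs (T c n x k) <= Rabs (c k) * INR k ^ n.
Proof. intros Hx. unfold T. rewrite Rabs_mult. apply Rmult_le_compat_l. apply Rabs_pos. apply P_bound; auto. Qed.

Lemma T_ex c n x : good c -> 0 <= x <= 1 -> ex_series (T c n x).
Proof.
  intros Hg Hx. apply ex_series_Rabs. apply (@ex_series_le R_AbsRing R_CompleteNormedModule _ (fun k => Rabs (c k) * INR k ^ n)).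
  intros k. rewrite norm_R, Rabs_Rabsolu. apply T_abs; auto. apply Hg.
Qed.

Lemma Sb_nonneg c m : good c -> 0 <= Sb c m.
Proof.
  intros Hg. unfold Sb.
  replace 0 with (Series (fun k => 0 * (Rabs (c k) * INR k ^ m))).
  2:{ rewrite Series_scal_l. ring. }
  apply Series_le. intros k. split. lra. rewrite Rmult_0_l. apply Rmult_le_pos. apply Rabs_pos. apply pow_le, pos_INR.
  apply Hg.
Qed.

Lemma F_bound c n x : good c -> 0 <= x <= 1 -> Rabs (F c n x) <= Sb c n.
Proof.
  intros Hg Hx. unfold F. eapply Rle_trans. apply Series_Rabs.
  apply ex_series_Rabs. apply (@ex_series_le R_AbsRing R_CompleteNormedModule _ (fun k => Rabs (c k) * INR k ^ n)).
  intros k. rewrite norm_R, Rabs_Rabsolu, Rabs_Rabsolu. apply T_abs; auto. apply Hg.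
  apply Series_le. intros k. split. apply Rabs_pos. apply T_abs; auto. apply Hg.
Qed.

Lemma F_taylor c n x z : good c -> 0 <= x <= 1 -> 0 <= z <= 1 ->
  Rabs (F c n z - F c n x - (z - x) * F c (S n) x) <= (z-x)^2 * Sb c (S (S n)).
Proof.
  intros Hg Hx Hz. unfold F.
  rewrite <- Series_scal_l. rewrite <- Series_minus by (apply T_ex; auto).
  rewrite <- Series_minus. 2:{ apply ex_series_Rabs. apply (@ex_series_le R_AbsRing R_CompleteNormedModule _ (fun k => Rabs (c k) * INR k ^ n + Rabs (c k) * INR k ^ n)).
     intros k. rewrite norm_R, Rabs_Rabsolu. unfold Rminus. eapply Rle_trans. apply Rabs_triang. rewrite Rabs_Ropp.
     apply Rplus_le_compat; apply T_abs; auto.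
     apply (ex_series_plus (V:=R_NormedModule)); apply Hg. }
   2:{ apply ex_series_scal_R. apply T_ex; auto. }
  assert (Hb : forall k, Rabs (T c n z k - T c n x k - (z - x) * T c (S n) x k) <= (z-x)^2 * (Rabs (c k) * INR k ^ S (S n))).
  { intros k. unfold T. replace (c k * P n k z - c k * P n k x - (z - x) * (c k * P (S n) k x)) with
     (c k * (P n k z - P n k x - (z-x) * P (S n) k x)) by ring.
    rewrite Rabs_mult. pose proof (P_taylor n k x z Hx Hz). pose proof (Rabs_pos (c k)).
    replace ((z - x) ^ 2 * (Rabs (c k) * INR k ^ S (S n))) with (Rabs (c k) * ((z - x) ^ 2 * INR k ^ S (S n))) by ring.
    apply Rmult_le_compat_l; auto. }
  assert (Hex : ex_series (fun k => (z-x)^2 * (Rabs (c k) * INR k ^ S (S n)))) by (apply ex_series_scal_R; apply Hg).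
  eapply Rle_trans. apply Series_Rabs.
  apply (@ex_series_le R_AbsRing R_CompleteNormedModule _ _ ltac:(intros k; rewrite norm_R, Rabs_Rabsolu; apply Hb) Hex).
  unfold Sb. rewrite <- Series_scal_l. apply Series_le; auto.
  intros k; split. apply Rabs_pos. apply Hb.
Qed.

Definition cl (x : R) := Rmax 0 (Rmin 1 x).
Lemma cl_id x : 0 <= x <= 1 -> cl x = x.
Proof. intros. unfold cl, Rmax, Rmin. repeat destruct Rle_dec; lra. Qed.
Lemma cl_01 x : 0 <= cl x <= 1.
Proof. unfold cl, Rmax, Rmin. repeat destruct Rle_dec; lra. Qed.
Lemma cl_lip x y : Rabs (cl y - cl x) <= Rabs (y - x).
Proof. unfold cl, Rmax, Rmin, Rabs. repeat destruct Rle_dec; repeat destruct Rcase_abs; lra. Qed.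

Definition Fc c n x := F c n (cl x).

Lemma F_deriv c n x h : good c -> h <> 0 -> 0 <= x <= 1 -> 0 <= x + h <= 1 ->
  Rabs (/ h * (F c n (x+h) - F c n x) - F c (S n) x) <= Rabs h * Sb c (S (S n)).
Proof.
  intros Hg Hh Hx Hxh. pose proof (F_taylor c n x (x+h) Hg Hx Hxh) as T1.
  replace (x + h - x) with h in T1 by ring.
  replace (/ h * (F c n (x + h) - F c n x) - F c (S n) x) with (/h * (F c n (x + h) - F c n x - h * F c (S n) x))
    by (field; auto).
  rewrite Rabs_mult. rewrite Rabs_inv.
  apply (Rmult_le_reg_l (Rabs h)). apply Rabs_pos_lt; auto.
  rewrite <- Rmult_assoc, Rinv_r by (apply Rabs_no_R0; auto). rewrite Rmult_1_l.
  replace (Rabs h * (Rabs h * Sb c (S (S n)))) with (h^2 * Sb c (S (S n))).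
  auto. rewrite <- Rmult_assoc. rewrite <- Rabs_mult. rewrite Rabs_pos_eq. ring. nra.
Qed.

Lemma F_lip c n x y : good c -> 0 <= x <= 1 -> 0 <= y <= 1 ->
  Rabs (F c n y - F c n x) <= (Sb c (S n) + Sb c (S (S n))) * Rabs (y - x).
Proof.
  intros Hg Hx Hy. pose proof (F_taylor c n x y Hg Hx Hy) as T1.
  pose proof (F_bound c (S n) x Hg Hx) as B1.
  pose proof (Sb_nonneg c (S (S n)) Hg).
  assert (Hd : Rabs (y - x) <= 1) by (unfold Rabs; destruct Rcase_abs; lra).
  assert ((y-x)^2 <= Rabs (y-x)).
  { rewrite <- (Rabs_pos_eq ((y-x)^2)) by apply pow2_ge_0. rewrite <- RPow_abs. simpl. pose proof (Rabs_pos (y-x)). nra. }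
  replace (F c n y - F c n x) with ((F c n y - F c n x - (y - x) * F c (S n) x) + (y-x) * F c (S n) x) by ring.
  eapply Rle_trans. apply Rabs_triang. rewrite Rabs_mult.
  pose proof (Rabs_pos (y-x)).
  assert (Rabs (y - x) * Rabs (F c (S n) x) <= Rabs (y-x) * Sb c (S n)) by (apply Rmult_le_compat_l; auto).
  assert ((y - x) ^ 2 * Sb c (S (S n)) <= Rabs (y-x) * Sb c (S (S n))) by (apply Rmult_le_compat_r; auto).
  nra.
Qed.

Lemma Fc_lip c n x y : good c ->
  Rabs (Fc c n y - Fc c n x) <= (Sb c (S n) + Sb c (S (S n))) * Rabs (y - x).
Proof.
  intros Hg. unfold Fc. eapply Rle_trans. apply F_lip; auto; apply cl_01.
  apply Rmult_le_compat_l. pose proof (Sb_nonneg c (S n) Hg). pose proof (Sb_nonneg c (S (S n)) Hg). lra.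
  apply cl_lip.
Qed.

Lemma lip_cont f L x0 : 0 <= L -> (forall x y, Rabs (f y - f x) <= L * Rabs (y - x)) -> continuity_pt f x0.
Proof.
  intros HL Hf. unfold continuity_pt, continue_in, limit1_in, limit_in. intros eps Heps.
  exists (eps / (L + 1)). split. apply Rdiv_lt_0_compat; lra.
  intros x [_ Hx]. simpl in *. unfold R_dist in *.
  eapply Rle_lt_trans. apply Hf.
  apply Rle_lt_trans with ((L+1) * Rabs (x - x0)). apply Rmult_le_compat_r. apply Rabs_pos. lra.
  apply (Rmult_lt_compat_l (L+1)) in Hx. 2: lra.
  replace ((L + 1) * (eps / (L + 1))) with eps in Hx by (field; lra). lra.
Qed.

Lemma Fc_cont c n x0 : good c -> continuity_pt (Fc c n) x0.
Proof.
  intros Hg. apply (lip_cont _ (Sb c (S n) + Sb c (S (S n)))).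
  pose proof (Sb_nonneg c (S n) Hg). pose proof (Sb_nonneg c (S (S n)) Hg). lra.
  intros; apply Fc_lip; auto.
Qed.

Lemma Cnorm_le z : Cnorm z <= Rabs (Re z) + Rabs (Im z).
Proof.
  unfold Cnorm, Cnorm2. pose proof (Rabs_pos (Re z)). pose proof (Rabs_pos (Im z)).
  rewrite <- (sqrt_pow2 (Rabs (Re z) + Rabs (Im z))) by lra. apply sqrt_le_1_alt.
  rewrite <- (pow2_abs (Re z)), <- (pow2_abs (Im z)). nra.
Qed.

Lemma Cnorm_ge_re z : Rabs (Re z) <= Cnorm z.
Proof.
  unfold Cnorm, Cnorm2. rewrite <- (sqrt_pow2 (Rabs (Re z))) by apply Rabs_pos. apply sqrt_le_1_alt.
  rewrite pow2_abs. pose proof (pow2_ge_0 (Im z)). lra.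
Qed.

Lemma Cnorm_ge_im z : Rabs (Im z) <= Cnorm z.
Proof.
  unfold Cnorm, Cnorm2. rewrite <- (sqrt_pow2 (Rabs (Im z))) by apply Rabs_pos. apply sqrt_le_1_alt.
  rewrite pow2_abs. pose proof (pow2_ge_0 (Re z)). lra.
Qed.

Definition Dt (cr ci : nat -> R) n x : Cpx := (Fc cr n x, Fc ci n x).

Lemma Dt_deriv cr ci n x : good cr -> good ci -> 0 <= x <= 1 ->
  is_deriv01 (Dt cr ci n) x (Dt cr ci (S n) x).
Proof.
  intros Hr Hi Hx eps Heps.
  pose proof (Sb_nonneg cr (S (S n)) Hr). pose proof (Sb_nonneg ci (S (S n)) Hi).
  set (S2 := Sb cr (S (S n)) + Sb ci (S (S n))).
  exists (eps / (S2 + 1)). split. apply Rdiv_lt_0_compat; unfold S2; lra.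
  intros h Hh Hxh Hd.
  eapply Rle_lt_trans. apply Cnorm_le.
  unfold Dt, Csub, Re, Im, Fc; simpl. rewrite !cl_id by auto.
  pose proof (F_deriv cr n x h Hr Hh Hx Hxh). pose proof (F_deriv ci n x h Hi Hh Hx Hxh).
  apply Rle_lt_trans with (Rabs h * S2). unfold S2. lra.
  apply Rle_lt_trans with (eps / (S2 + 1) * S2). apply Rmult_le_compat_r. unfold S2; lra. lra.
  apply (Rmult_lt_reg_r (S2 + 1)). unfold S2; lra.
  replace (eps / (S2 + 1) * S2 * (S2 + 1)) with (eps * S2) by (field; unfold S2; lra).
  unfold S2. nra.
Qed.

Lemma exp_lb y n : 0 <= y -> y ^ n / INR (fact n) <= exp y.
Proof.
  intros Hy. pose proof (exp_ge_taylor y n Hy). destruct n as [|n].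
  - simpl in *. lra.
  - rewrite tech5 in H.
    assert (0 <= sum_f_R0 (fun k => y ^ k / INR (fact k)) n).
    { apply cond_pos_sum. intros k. apply Rdiv_le_0_compat. apply pow_le; auto. apply INR_fact_lt_0. }
    lra.
Qed.

Definition w (k : nat) : R := match k with O => 0 | S j => 2 / (INR k * (INR k + 1)) end.

Lemma w_nonneg k : 0 <= w k.
Proof. destruct k. unfold w; lra. change (w (S k)) with (2/(INR (S k) * (INR (S k)+1))). apply Rdiv_le_0_compat. lra. 
  pose proof (pos_INR (S k)). assert (0 < INR (S k)) by (apply lt_0_INR; lia). apply Rmult_lt_0_compat; lra. Qed.

Lemma w_partial N : sum_f_R0 w N = 2 - 2 / (INR N + 1).
Proof.
  induction N. simpl. field.
  rewrite tech5, IHN. change (w (S N)) with (2/(INR (S N) * (INR (S N)+1))). pose proof (pos_INR N). rewrite S_INR. field. lra.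
Qed.

Lemma w_series : is_series w 2.
Proof.
  apply is_series_Reals. unfold infinite_sum. intros eps Heps.
  destruct (archimed (2 / eps)) as [Ha _].
  assert (0 <= IZR (up (2/eps))). { assert (0 < 2/eps) by (apply Rdiv_lt_0_compat; lra). lra. }
  exists (Z.to_nat (up (2/eps))). intros n Hn. unfold R_dist. rewrite w_partial.
  replace (2 - 2 / (INR n + 1) - 2) with (- (2 / (INR n + 1))) by ring. rewrite Rabs_Ropp.
  pose proof (pos_INR n).
  rewrite Rabs_pos_eq by (apply Rdiv_le_0_compat; lra).
  assert (INR (Z.to_nat (up (2/eps))) <= INR n) by (apply le_INR; lia).
  rewrite INR_IZR_INZ in H1. rewrite Z2Nat.id in H1. 2:{ apply le_IZR. simpl. lra. }
  apply (Rmult_lt_reg_r (INR n + 1)). lra. unfold Rdiv. rewrite Rmult_assoc, Rinv_l by lra. 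
  assert (eps * (2/eps) = 2) by (field; lra). nra.
Qed.

Lemma w_ex : ex_series w.
Proof. exists 2. apply w_series. Qed.

Lemma c_bound (c : nat -> R) (M al ep ga : R) : 0 < ep -> 0 < ga -> 2 * al = ep + ga -> c O = 0 ->
  (forall k, (1 <= k)%nat -> Rabs (c k) * exp (2 * al * sqrt (INR k)) <= M) ->
  forall m k, Rabs (c k) * INR k ^ m <= (24 * M * INR (fact (2*m)) / (ep^4 * ga^(2*m))) * w k.
Proof.
  intros Hep Hga Hal Hc0 HM m k. destruct k as [|j].
  - rewrite Hc0, Rabs_R0. unfold w. lra.
  - set (x := INR (S j)). assert (Hx : 1 <= x) by (unfold x; rewrite S_INR; pose proof (pos_INR j); lra).
    set (t := sqrt x). assert (Ht2 : t * t = x) by (apply sqrt_sqrt; lra).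
    assert (Ht : 0 < t) by (apply sqrt_lt_R0; lra).
    specialize (HM (S j) ltac:(lia)). fold x in HM. fold t in HM.
    replace (2 * al * t) with (ep * t + ga * t) in HM by (rewrite <- Rmult_plus_distr_r, <- Hal; ring).
    rewrite exp_plus in HM.
    pose proof (exp_lb (ep * t) 4 ltac:(nra)) as E1.
    pose proof (exp_lb (ga * t) (2*m) ltac:(nra)) as E2.
    assert (F4 : INR (fact 4) = 24) by (simpl; lra). rewrite F4 in E1.
    assert (P1 : (ep * t) ^ 4 = ep ^ 4 * (x * x)) by (rewrite <- Ht2; ring).
    assert (P2 : (ga * t) ^ (2 * m) = ga ^ (2*m) * x ^ m).
    { rewrite Rpow_mult_distr. f_equal. rewrite pow_mult. replace (t^2) with x by (rewrite <- Ht2; ring). reflexivity. }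
    rewrite P1 in E1. rewrite P2 in E2.
    set (A := Rabs (c (S j))). assert (HA : 0 <= A) by apply Rabs_pos.
    set (Fm := INR (fact (2*m))). assert (HF : 0 < Fm) by apply INR_fact_lt_0.
    assert (Hep4 : 0 < ep ^ 4) by (apply pow_lt; lra).
    assert (Hga4 : 0 < ga ^ (2*m)) by (apply pow_lt; lra).
    assert (Hxm : 0 < x ^ m) by (apply pow_lt; lra).
    assert (Hkey : A * (ep ^ 4 * (x * x) / 24) * (ga ^ (2 * m) * x ^ m / Fm) <= M).
    { eapply Rle_trans; [|exact HM]. rewrite Rmult_assoc. apply Rmult_le_compat_l; auto.
      apply Rmult_le_compat; auto. apply Rdiv_le_0_compat; nra. apply Rdiv_le_0_compat; nra. }
    change (w (S j)) with (2 / (x * (x + 1))).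
    assert (Hkey2 : A * x ^ m * (x * x) <= 24 * M * Fm / (ep ^ 4 * ga ^ (2 * m))).
    { apply (Rmult_le_reg_r (ep ^ 4 * ga ^ (2 * m) / (24 * Fm))). apply Rdiv_lt_0_compat; nra.
      replace (24 * M * Fm / (ep ^ 4 * ga ^ (2 * m)) * (ep ^ 4 * ga ^ (2 * m) / (24 * Fm))) with M by (field; lra).
      eapply Rle_trans; [|exact Hkey]. right. field. lra. }
    set (R0 := 24 * M * Fm / (ep ^ 4 * ga ^ (2 * m))) in *.
    assert (0 <= R0). { assert (0 <= A * x ^ m * (x * x)) by (apply Rmult_le_pos; nra). lra. }
    apply (Rmult_le_reg_r (x * x)). nra.
    eapply Rle_trans. exact Hkey2.
    replace (R0 * (2 / (x * (x + 1))) * (x * x)) with (R0 * (2 * x / (x + 1))) by (field; lra).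
    rewrite <- (Rmult_1_r R0) at 1. apply Rmult_le_compat_l; auto.
    apply (Rmult_le_reg_r (x+1)). lra. unfold Rdiv. rewrite Rmult_assoc, Rinv_l by lra. lra.
Qed.

Lemma good_of_bound c (K : nat -> R) : (forall m k, Rabs (c k) * INR k ^ m <= K m * w k) -> good c.
Proof.
  intros Hb m. apply (@ex_series_le R_AbsRing R_CompleteNormedModule _ (fun k => K m * w k)).
  intros k. rewrite norm_R. rewrite Rabs_pos_eq. apply Hb. apply Rmult_le_pos. apply Rabs_pos. apply pow_le, pos_INR.
  apply ex_series_scal_R. apply w_ex.
Qed.

Lemma Sb_of_bound c (K : nat -> R) : (forall m k, Rabs (c k) * INR k ^ m <= K m * w k) -> forall m, Sb c m <= K m * 2.
Proof.
  intros Hb m. unfold Sb. rewrite <- (is_series_unique w 2 w_series). rewrite <- Series_scal_l.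
  apply Series_le. intros k. split. apply Rmult_le_pos. apply Rabs_pos. apply pow_le, pos_INR. apply Hb.
  apply ex_series_scal_R. apply w_ex.
Qed.

Lemma fact2 m : INR (fact (2*m)) <= INR (fact m)^2 * 4^m.
Proof.
  induction m as [|m IH]. simpl. lra.
  replace (2 * S m)%nat with (S (S (2*m))) by lia.
  rewrite !fact_simpl, !mult_INR.
  pose proof (INR_fact_lt_0 (2*m)). pose proof (INR_fact_lt_0 m).
  assert (H1 : INR (S (S (2 * m))) * INR (S (2 * m)) <= 4 * INR (S m) ^ 2).
  { rewrite !S_INR, mult_INR. pose proof (pos_INR m). simpl. nra. }
  replace ((INR (S m) * INR (fact m)) ^ 2 * 4 ^ S m) with ((4 * INR (S m) ^ 2) * (INR (fact m) ^ 2 * 4 ^ m)) by (simpl; ring).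
  rewrite <- Rmult_assoc. apply Rmult_le_compat; auto.
  apply Rmult_le_pos; apply pos_INR. lra.
Qed.

Lemma exp_pow_n d n : exp d ^ n = exp (d * INR n).
Proof.
  induction n. simpl. rewrite Rmult_0_r, exp_0. reflexivity.
  rewrite S_INR. simpl. rewrite IHn, <- exp_plus. f_equal. ring.
Qed.

Lemma pow_sq_comm x n : (x^2)^n = (x^n)^2.
Proof. rewrite <- !pow_mult. f_equal; lia. Qed.

Lemma term_bound (sg ga G : R) j n : 0 < sg -> 0 < ga ->
  wcoef sg n * INR n ^ j * (G * INR (fact (2 * S n)) / ga ^ (2 * S n)) ^ 2 <=
  (16 * G^2 / ga^4) * INR (S n) ^ (j + 2) * (16 * sg^2 / ga^4) ^ n.
Proof.
  intros Hs Hg. unfold wcoef.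
  set (a := INR (fact n)). set (b := INR (fact (S n))).
  assert (Hb : b = INR (S n) * a) by (unfold a, b; rewrite fact_simpl, mult_INR; auto).
  assert (Ha : 0 < a) by apply INR_fact_lt_0.
  assert (HSn : 0 < INR (S n)) by (apply lt_0_INR; lia).
  set (F2 := INR (fact (2 * S n))).
  assert (HF2 : 0 <= F2 <= b^2 * (4 * 4^n)) by (split; [apply pos_INR| apply (fact2 (S n))]).
  rewrite pow_mult. replace (2 * S n)%nat with (S n * 2)%nat by lia. rewrite pow_mult.
  set (U := (sg^2)^n). assert (HU : 0 < U) by (apply pow_lt; nra).
  replace ((ga ^ S n) ^ 2) with (ga^2 * (ga^2)^n) by (rewrite <- !pow_mult; rewrite <- pow_add; f_equal; lia).
  set (V := (ga^2)^n). assert (HV : 0 < V) by (apply pow_lt; nra).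
  replace ((16 * sg ^ 2 / ga ^ 4) ^ n) with ((4^n)^2 * U / V^2).
  2:{ replace (16 * sg ^ 2 / ga ^ 4) with (4^2 * sg^2 * / (ga^2)^2) by (field; lra).
      rewrite !Rpow_mult_distr, pow_inv, (pow_sq_comm 4). fold U. rewrite (pow_sq_comm (ga^2)). fold V. unfold Rdiv. ring. }
  set (W4 := 4^n). assert (HW : 0 < W4) by (apply pow_lt; lra).
  assert (HN : 0 <= INR n ^ j <= INR (S n) ^ j).
  { split. apply pow_le, pos_INR. apply pow_incr. split. apply pos_INR. apply le_INR; lia. }
  rewrite pow_add.
  assert (Hga2 : 0 < ga^2) by nra.
  apply Rle_trans with (U / (a^2 * b^2) * INR (S n) ^ j * (G * (b^2 * (4 * W4)) / (ga ^ 2 * V)) ^ 2).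
  - apply Rmult_le_compat. 
    + apply Rmult_le_pos. apply Rdiv_le_0_compat. lra. rewrite Hb. apply Rmult_lt_0_compat; apply pow_lt; nra. apply HN.
    + apply pow2_ge_0.
    + apply Rmult_le_compat_l. apply Rdiv_le_0_compat. lra. rewrite Hb. apply Rmult_lt_0_compat; apply pow_lt; nra. apply HN.
    + assert (F2 <= b^2*(4*W4)) by (unfold W4; exact (proj2 HF2)).
      assert (F2^2 <= (b^2*(4*W4))^2) by (apply pow_incr; lra).
      set (Bd := b^2*(4*W4)) in *.
      unfold Rdiv. rewrite !Rpow_mult_distr. apply Rmult_le_compat_r. apply pow2_ge_0.
      apply Rmult_le_compat_l. apply pow2_ge_0. auto.
  - right. rewrite Hb. clearbody U V W4 a. field. repeat split; lra.
Qed.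

Lemma sum_bound (sg ga G : R) j : 0 < sg -> 0 < ga -> 4 * sg < ga^2 ->
  exists C, forall N, sum_f_R0 (fun n => wcoef sg n * INR n ^ j * (G * INR (fact (2 * S n)) / ga ^ (2 * S n)) ^ 2) N <= C.
Proof.
  intros Hs Hg Hsg.
  set (rho := 16 * sg^2 / ga^4).
  assert (Hrho : 0 < rho < 1).
  { unfold rho. split. apply Rdiv_lt_0_compat. nra. apply pow_lt; lra.
    apply (Rmult_lt_reg_r (ga^4)). apply pow_lt; lra. unfold Rdiv. rewrite Rmult_assoc, Rinv_l. 2:{ apply pow_nonzero; lra. }
    replace (ga^4) with (ga^2*ga^2) by ring. nra. }
  assert (Hln : ln rho < 0) by (rewrite <- ln_1; apply ln_increasing; lra).
  set (d := - ln rho / 2). assert (Hd : 0 < d) by (unfold d; lra).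
  set (q := exp d * rho).
  assert (Hq : 0 < q < 1).
  { unfold q. split. apply Rmult_lt_0_compat. apply exp_pos. lra.
    rewrite <- (exp_ln rho) by lra. rewrite <- exp_plus. rewrite <- exp_0. apply exp_increasing. unfold d. lra. }
  set (p := (j + 2)%nat).
  set (C2 := 16 * G ^ 2 / ga ^ 4 * (INR (fact p) / d ^ p * exp d)).
  assert (HC2 : 0 <= C2).
  { unfold C2. apply Rmult_le_pos. apply Rdiv_le_0_compat. apply Rmult_le_pos. lra. apply pow2_ge_0. apply pow_lt; lra.
    apply Rmult_le_pos. apply Rdiv_le_0_compat. apply pos_INR. apply pow_lt; lra. left; apply exp_pos. }
  exists (C2 / (1 - q)). intros N.
  apply Rle_trans with (sum_f_R0 (fun n => C2 * q ^ n) N).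
  - apply sum_Rle. intros n _. eapply Rle_trans. apply term_bound; auto. fold rho. fold p.
    assert (E : INR (S n) ^ p <= INR (fact p) / d ^ p * exp d * exp d ^ n).
    { pose proof (exp_lb (d * INR (S n)) p ltac:(pose proof (pos_INR (S n)); nra)) as E.
      rewrite Rpow_mult_distr in E. rewrite <- exp_pow_n in E. simpl (exp d ^ S n) in E.
      assert (0 < d ^ p) by (apply pow_lt; lra). pose proof (INR_fact_lt_0 p).
      apply (Rmult_le_reg_l (d ^ p / INR (fact p))). apply Rdiv_lt_0_compat; lra.
      replace (d ^ p / INR (fact p) * (INR (fact p) / d ^ p * exp d * exp d ^ n)) with (exp d * exp d ^ n) by (field; lra).
      replace (d ^ p / INR (fact p) * INR (S n) ^ p) with (d ^ p * INR (S n) ^ p / INR (fact p)) by (field; lra). exact E. }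
    unfold q. rewrite Rpow_mult_distr. unfold C2.
    assert (0 <= 16 * G ^ 2 / ga ^ 4). { apply Rdiv_le_0_compat. apply Rmult_le_pos. lra. apply pow2_ge_0. apply pow_lt; lra. }
    assert (0 <= rho ^ n) by (apply pow_le; lra).
    replace (16 * G ^ 2 / ga ^ 4 * (INR (fact p) / d ^ p * exp d) * (exp d ^ n * rho ^ n))
      with (16 * G ^ 2 / ga ^ 4 * (INR (fact p) / d ^ p * exp d * exp d ^ n) * rho ^ n) by ring.
    apply Rmult_le_compat_r; auto. apply Rmult_le_compat_l; auto.
  - rewrite (sum_eq _ (fun n => q^n * C2)) by (intros; ring). rewrite <- scal_sum. rewrite tech3 by lra.
    assert (0 < q ^ S N) by (apply pow_lt; lra).
    unfold Rdiv. apply Rmult_le_compat_l; auto. rewrite <- (Rmult_1_l (/ (1 - q))) at 2. apply Rmult_le_compat_r.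
    left. apply Rinv_0_lt_compat. lra. lra.
Qed.

Definition cre (H : nat -> Cpx) (k : nat) : R := match k with O => 0 | S _ => Re (H k) end.
Definition cim (H : nat -> Cpx) (k : nat) : R := match k with O => 0 | S _ => Im (H k) end.

Lemma F0_gen (c : nat -> R) (l : R) x : c O = 0 ->
  infinite_sum (fun j => c (S j) * (1 - x) ^ S j) l -> F c 0 x = l.
Proof.
  intros Hc0 Hs. unfold F. apply is_series_unique. apply is_series_decr_1.
  match goal with |- is_series _ ?L => replace L with l end.
  2:{ unfold T. rewrite Hc0. change (l = l + - (0 * P 0 0 x)). ring. }
  apply (is_series_ext (fun j => c (S j) * (1 - x) ^ S j)).
  intros j. unfold T, P. rewrite Nat.sub_0_r. cbn [ff pow]. match goal with |- ?a = ?b => change (@eq R a b) end. ring.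
  apply is_series_Reals. exact Hs.
Qed.

Lemma infinite_sum_ext (a b : nat -> R) l : (forall n, a n = b n) -> infinite_sum a l -> infinite_sum b l.
Proof. intros E Hs. apply is_series_Reals. apply (is_series_ext a). exact E. apply is_series_Reals; exact Hs. Qed.

Lemma F0_re (H : nat -> Cpx) (v : Cpx) x : Cseries (fun k => Cmul (H (S k)) (RtoC ((1 - x) ^ (S k)))) v ->
  F (cre H) 0 x = Re v.
Proof.
  intros [Hr _]. apply F0_gen. reflexivity.
  eapply infinite_sum_ext; [|exact Hr]. intros j. unfold cre, Cmul, RtoC, Re, Im; cbn [fst snd]. ring.
Qed.

Lemma F0_im (H : nat -> Cpx) (v : Cpx) x : Cseries (fun k => Cmul (H (S k)) (RtoC ((1 - x) ^ (S k)))) v ->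
  F (cim H) 0 x = Im v.
Proof.
  intros [_ Hr]. apply F0_gen. reflexivity.
  eapply infinite_sum_ext; [|exact Hr]. intros j. unfold cim, Cmul, RtoC, Re, Im; cbn [fst snd]. ring.
Qed.

Lemma Cnorm2_nonneg z : 0 <= Cnorm2 z.
Proof. unfold Cnorm2. pose proof (pow2_ge_0 (Re z)). pose proof (pow2_ge_0 (Im z)). lra. Qed.

Lemma Cnorm_mul z w : Cnorm (Cmul z w) = Cnorm z * Cnorm w.
Proof.
  unfold Cnorm. rewrite <- sqrt_mult by apply Cnorm2_nonneg. f_equal.
  unfold Cnorm2, Cmul, Re, Im; cbn [fst snd]. ring.
Qed.

Lemma Cnorm_exp z : Cnorm (Cexp z) = exp (Re z).
Proof.
  unfold Cnorm, Cnorm2, Cexp, Re, Im. cbn [fst snd].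
  pose proof (sin2_cos2 (snd z)). unfold Rsqr in H. 
  replace ((exp (fst z) * cos (snd z)) ^ 2 + (exp (fst z) * sin (snd z)) ^ 2) with (exp (fst z) ^ 2 * (sin (snd z) * sin (snd z) + cos (snd z) * cos (snd z))) by ring.
  rewrite H, Rmult_1_r. apply sqrt_pow2. left; apply exp_pos.
Qed.

Lemma Re_Csqrt_k s k : Re (Csqrt (Cmul s (RtoC (INR k)))) = sqrt (INR k) * Re (Csqrt s).
Proof.
  unfold Csqrt at 1. unfold Re at 1. cbn [fst].
  rewrite Cnorm_mul. replace (Cnorm (RtoC (INR k))) with (INR k).
  2:{ unfold Cnorm, Cnorm2, RtoC, Re, Im. cbn [fst snd]. replace (INR k ^ 2 + 0 ^ 2) with (INR k ^ 2) by ring.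
      rewrite sqrt_pow2; auto. apply pos_INR. }
  unfold Csqrt. unfold Re at 2 3. cbn [fst]. unfold Cmul, RtoC, Re, Im; cbn [fst snd].
  rewrite <- sqrt_mult_alt by apply pos_INR. f_equal. field.
Qed.

Lemma leaver_bound (s : Cpx) (H : nat -> Cpx) M k : (1 <= k)%nat ->
  Cnorm (Cmul (H k) (Cexp (Cmul (RtoC 2) (Csqrt (Cmul s (RtoC (INR k))))))) <= M ->
  Cnorm (H k) * exp (2 * Re (Csqrt s) * sqrt (INR k)) <= M.
Proof.
  intros _ Hb. rewrite Cnorm_mul, Cnorm_exp in Hb.
  replace (Re (Cmul (RtoC 2) (Csqrt (Cmul s (RtoC (INR k)))))) with (2 * Re (Csqrt s) * sqrt (INR k)) in Hb. exact Hb.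
  unfold Cmul at 1. rewrite (Re_Csqrt_k s k). unfold RtoC, Re, Im. cbn [fst snd]. ring.
Qed.

Lemma cont_pow f x k : continuity_pt f x -> continuity_pt (fun y => f y ^ k) x.
Proof.
  intros Hf. induction k. simpl. apply continuity_pt_const. intros a b; reflexivity.
  exact (continuity_pt_mult f (fun y => f y ^ k) x Hf IHk).
Qed.

Lemma integrand_cont cr ci sg j n x : good cr -> good ci -> 0 < sg ->
  continuity_pt (fun y => (y / sg) ^ j * Cnorm2 (Dt cr ci (S n) y)) x.
Proof.
  intros Hr Hi Hs.
  assert (C1 : continuity_pt (fun y => y / sg) x).
  { apply (lip_cont _ (/ sg)). left; apply Rinv_0_lt_compat; auto. intros a b.
    replace (b / sg - a / sg) with (/ sg * (b - a)) by (field; lra). rewrite Rabs_mult.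
    rewrite (Rabs_pos_eq (/ sg)). lra. left; apply Rinv_0_lt_compat; auto. }
  apply (continuity_pt_mult (fun y => (y / sg) ^ j) (fun y => Cnorm2 (Dt cr ci (S n) y))).
  apply cont_pow; auto.
  exact (continuity_pt_plus (fun y => Fc cr (S n) y ^ 2) (fun y => Fc ci (S n) y ^ 2) x
           (cont_pow _ _ 2 (Fc_cont cr (S n) x Hr)) (cont_pow _ _ 2 (Fc_cont ci (S n) x Hi))).
Qed.

Lemma sq_le_B (a B : R) : Rabs a <= B -> a ^ 2 <= B ^ 2.
Proof. intros H. rewrite <- pow2_abs. apply pow_incr. split. apply Rabs_pos. auto. Qed.

Lemma seminorm_ok cr ci sg j (B : nat -> R) : good cr -> good ci -> 0 < sg ->
  (forall m, Sb cr m <= B m) -> (forall m, Sb ci m <= B m) ->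
  (exists C, forall N, sum_f_R0 (fun n => wcoef sg n * INR n ^ j * B (S n) ^ 2) N <= C) ->
  seminorm_finite sg j (fun n => Dt cr ci (S n)).
Proof.
  intros Hr Hi Hs Br Bi [C HC].
  assert (pr : forall n, Riemann_integrable (fun y => (y / sg) ^ j * Cnorm2 (Dt cr ci (S n) y)) 0 1).
  { intros n. apply continuity_implies_RiemannInt. lra. intros x _. apply integrand_cont; auto. }
  assert (Kc : 0 <= 2 * (/ sg) ^ j) by (apply Rmult_le_pos; [lra| apply pow_le; left; apply Rinv_0_lt_compat; auto]).
  exists (fun n => RiemannInt (pr n)), (2 * (/ sg) ^ j * C). split.
  - intros n. exists (pr n). reflexivity.
  - intros N. apply Rle_trans with (sum_f_R0 (fun n => (wcoef sg n * INR n ^ j * B (S n) ^ 2) * (2 * (/ sg) ^ j)) N).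
    + apply sum_Rle. intros n _.
      assert (Hw : 0 <= wcoef sg n * INR n ^ j).
      { apply Rmult_le_pos. unfold wcoef. apply Rdiv_le_0_compat. apply pow_le; lra.
        apply Rmult_lt_0_compat; apply pow_lt; apply INR_fact_lt_0. apply pow_le, pos_INR. }
      replace (wcoef sg n * INR n ^ j * B (S n) ^ 2 * (2 * (/ sg) ^ j)) with ((wcoef sg n * INR n ^ j) * (B (S n) ^ 2 * (2 * (/ sg) ^ j))) by ring.
      apply Rmult_le_compat_l; auto.
      replace (B (S n) ^ 2 * (2 * (/ sg) ^ j)) with (RiemannInt (RiemannInt_P14 0 1 (B (S n) ^ 2 * (2 * (/ sg) ^ j))))
        by (rewrite RiemannInt_P15; ring).
      apply RiemannInt_P19. lra. intros x Hx. unfold fct_cte. cbn beta.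
      unfold Cnorm2, Dt, Re, Im. cbn [fst snd]. unfold Fc. rewrite cl_id by lra.
      pose proof (F_bound cr (S n) x Hr ltac:(lra)). pose proof (F_bound ci (S n) x Hi ltac:(lra)).
      pose proof (Br (S n)). pose proof (Bi (S n)).
      assert (E1 : F cr (S n) x ^ 2 <= B (S n) ^ 2) by (apply sq_le_B; lra).
      assert (E2 : F ci (S n) x ^ 2 <= B (S n) ^ 2) by (apply sq_le_B; lra).
      assert (E3 : (x / sg) ^ j <= (/ sg) ^ j).
      { apply pow_incr. split. apply Rdiv_le_0_compat; lra. unfold Rdiv. rewrite <- (Rmult_1_l (/ sg)) at 2.
        apply Rmult_le_compat_r. left; apply Rinv_0_lt_compat; auto. lra. }
      assert (0 <= (x / sg) ^ j) by (apply pow_le; apply Rdiv_le_0_compat; lra).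
      assert (0 <= F cr (S n) x ^ 2 + F ci (S n) x ^ 2) by (pose proof (pow2_ge_0 (F cr (S n) x)); pose proof (pow2_ge_0 (F ci (S n) x)); lra).
      apply Rle_trans with ((/ sg) ^ j * (F cr (S n) x ^ 2 + F ci (S n) x ^ 2)).
      apply Rmult_le_compat_r; auto. 
      replace (B (S n) ^ 2 * (2 * (/ sg) ^ j)) with ((/ sg) ^ j * (2 * B (S n) ^ 2)) by ring.
      apply Rmult_le_compat_l. lra. lra.
    + rewrite <- scal_sum. apply Rmult_le_compat_l; auto.
Qed.

Lemma bdry_ok cr ci sg (B : nat -> R) : good cr -> good ci -> 0 < sg ->
  (forall m, Sb cr m <= B m) -> (forall m, Sb ci m <= B m) ->
  (exists C, forall N, sum_f_R0 (fun n => wcoef sg n * INR n ^ 0 * B (S n) ^ 2) N <= C) ->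
  bdry_finite sg (fun n => Dt cr ci (S n)).
Proof.
  intros Hr Hi Hs Br Bi [C HC]. exists (2 * sg * C). intros N.
  apply Rle_trans with (sum_f_R0 (fun n => (wcoef sg n * INR n ^ 0 * B (S n) ^ 2) * (2 * sg)) N).
  - apply sum_Rle. intros n _.
    assert (Hw : 0 <= wcoef sg n).
    { unfold wcoef. apply Rdiv_le_0_compat. apply pow_le; lra.
      apply Rmult_lt_0_compat; apply pow_lt; apply INR_fact_lt_0. }
    unfold Cnorm2, Dt, Re, Im. cbn [fst snd]. unfold Fc. rewrite cl_id by lra.
    pose proof (F_bound cr (S n) 0 Hr ltac:(lra)). pose proof (F_bound ci (S n) 0 Hi ltac:(lra)).
    pose proof (Br (S n)). pose proof (Bi (S n)).
    assert (E1 : F cr (S n) 0 ^ 2 <= B (S n) ^ 2) by (apply sq_le_B; lra).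
    assert (E2 : F ci (S n) 0 ^ 2 <= B (S n) ^ 2) by (apply sq_le_B; lra).
    simpl (INR n ^ 0).
    replace (wcoef sg n * 1 * B (S n) ^ 2 * (2 * sg)) with ((wcoef sg n * sg) * (2 * B (S n) ^ 2)) by ring.
    apply Rmult_le_compat_l. apply Rmult_le_pos; lra. lra.
  - rewrite <- scal_sum. apply Rmult_le_compat_l; auto. lra.
Qed.

Lemma deriv_unique f g x l1 l2 :
  (forall d, 0 < d -> exists h, h <> 0 /\ 0 <= x + h <= 1 /\ Rabs h < d /\ f (x+h) = g (x+h)) ->
  f x = g x -> is_deriv01 f x l1 -> is_deriv01 g x l2 -> l1 = l2.
Proof.
  intros Hh Hx D1 D2.
  assert (Hre : forall e, 0 < e -> Rabs (Re l1 - Re l2) < 2 * e /\ Rabs (Im l1 - Im l2) < 2 * e).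
  { intros e He. destruct (D1 e He) as [d1 [Hd1 P1]]. destruct (D2 e He) as [d2 [Hd2 P2]].
    destruct (Hh (Rmin d1 d2) ltac:(apply Rmin_pos; auto)) as [h [Hh0 [Hxh [Hhd Hfg]]]].
    assert (Rabs h < d1) by (eapply Rlt_le_trans; [exact Hhd| apply Rmin_l]).
    assert (Rabs h < d2) by (eapply Rlt_le_trans; [exact Hhd| apply Rmin_r]).
    specialize (P1 h Hh0 Hxh H). specialize (P2 h Hh0 Hxh H0).
    rewrite Hfg, Hx in P1.
    set (q := (/ h * Re (Csub (g (x + h)) (g x)), / h * Im (Csub (g (x + h)) (g x)))) in *.
    assert (A1 : Rabs (Re q - Re l1) < e) by (eapply Rle_lt_trans; [apply (Cnorm_ge_re (Csub q l1)) | exact P1]).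
    assert (A2 : Rabs (Re q - Re l2) < e) by (eapply Rle_lt_trans; [apply (Cnorm_ge_re (Csub q l2)) | exact P2]).
    assert (A3 : Rabs (Im q - Im l1) < e) by (eapply Rle_lt_trans; [apply (Cnorm_ge_im (Csub q l1)) | exact P1]).
    assert (A4 : Rabs (Im q - Im l2) < e) by (eapply Rle_lt_trans; [apply (Cnorm_ge_im (Csub q l2)) | exact P2]).
    split.
    - replace (Re l1 - Re l2) with ((Re q - Re l2) - (Re q - Re l1)) by ring.
      eapply Rle_lt_trans. apply Rabs_triang. rewrite Rabs_Ropp. lra.
    - replace (Im l1 - Im l2) with ((Im q - Im l2) - (Im q - Im l1)) by ring.
      eapply Rle_lt_trans. apply Rabs_triang. rewrite Rabs_Ropp. lra. }
  assert (E : forall a b, (forall e, 0 < e -> Rabs (a - b) < 2 * e) -> a = b).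
  { intros a b Hab. destruct (Req_dec a b) as [|Hn]; auto. exfalso.
    assert (0 < Rabs (a - b)) by (apply Rabs_pos_lt; lra).
    specialize (Hab (Rabs (a - b) / 2) ltac:(lra)). lra. }
  destruct l1 as [a1 b1]. destruct l2 as [a2 b2].
  f_equal; apply E; intros e He; apply (Hre e He).
Qed.

Definition Ccont (f : R -> Cpx) x := continuity_pt (fun y => Re (f y)) x /\ continuity_pt (fun y => Im (f y)) x.

Lemma Ccont_add f g x : Ccont f x -> Ccont g x -> Ccont (fun y => Cadd (f y) (g y)) x.
Proof.
  intros [F1 F2] [G1 G2]. split.
  exact (continuity_pt_plus (fun y => Re (f y)) (fun y => Re (g y)) x F1 G1).
  exact (continuity_pt_plus (fun y => Im (f y)) (fun y => Im (g y)) x F2 G2).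
Qed.

Lemma Ccont_sub f g x : Ccont f x -> Ccont g x -> Ccont (fun y => Csub (f y) (g y)) x.
Proof.
  intros [F1 F2] [G1 G2]. split.
  exact (continuity_pt_minus (fun y => Re (f y)) (fun y => Re (g y)) x F1 G1).
  exact (continuity_pt_minus (fun y => Im (f y)) (fun y => Im (g y)) x F2 G2).
Qed.

Lemma Ccont_mul f g x : Ccont f x -> Ccont g x -> Ccont (fun y => Cmul (f y) (g y)) x.
Proof.
  intros [F1 F2] [G1 G2]. split.
  exact (continuity_pt_minus (fun y => Re (f y) * Re (g y)) (fun y => Im (f y) * Im (g y)) x
     (continuity_pt_mult (fun y => Re (f y)) (fun y => Re (g y)) x F1 G1)
     (continuity_pt_mult (fun y => Im (f y)) (fun y => Im (g y)) x F2 G2)).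
  exact (continuity_pt_plus (fun y => Re (f y) * Im (g y)) (fun y => Im (f y) * Re (g y)) x
     (continuity_pt_mult (fun y => Re (f y)) (fun y => Im (g y)) x F1 G2)
     (continuity_pt_mult (fun y => Im (f y)) (fun y => Re (g y)) x F2 G1)).
Qed.

Lemma Ccont_const (a : Cpx) x : Ccont (fun _ => a) x.
Proof. split; apply continuity_pt_const; intros u v; reflexivity. Qed.

Lemma Ccont_RtoC f x : continuity_pt f x -> Ccont (fun y => RtoC (f y)) x.
Proof. intros Hf. split. exact Hf. unfold RtoC, Im; cbn [snd]. apply continuity_pt_const; intros u v; reflexivity. Qed.

Lemma Ccont_Peval W x : Ccont (fun y => Peval W y) x.
Proof.
  induction W as [|a W IH]; simpl.
  - apply Ccont_const.
  - apply Ccont_add. apply Ccont_const. apply Ccont_mul; auto. apply Ccont_RtoC. apply continuity_pt_id.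
Qed.

Lemma Ccont_Dt cr ci n x : good cr -> good ci -> Ccont (Dt cr ci n) x.
Proof. intros Hr Hi. split. exact (Fc_cont cr n x Hr). exact (Fc_cont ci n x Hi). Qed.

Lemma Ccont_Lop s W cr ci x : good cr -> good ci -> Ccont (Lop s W (Dt cr ci)) x.
Proof.
  intros Hr Hi. unfold Lop. apply Ccont_sub.
  - apply Ccont_add; apply Ccont_mul; try apply Ccont_Dt; auto.
    + apply Ccont_RtoC. apply cont_pow. apply continuity_pt_id.
    + apply Ccont_add. apply Ccont_RtoC.
      exact (continuity_pt_mult (fun _ => 2) (fun y => y) x (continuity_pt_const (fun _ => 2) x ltac:(intros u v; reflexivity)) (continuity_pt_id x)).
      apply Ccont_const.
  - apply Ccont_mul. apply Ccont_Peval. apply Ccont_Dt; auto.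
Qed.

Lemma zero_end (phi : R -> R) x0 : continuity_pt phi x0 -> (x0 = 0 \/ x0 = 1) ->
  (forall y, 0 < y < 1 -> phi y = 0) -> phi x0 = 0.
Proof.
  intros Hc Hx Hz. destruct (Req_dec (phi x0) 0) as [|Hn]; auto. exfalso.
  assert (He : 0 < Rabs (phi x0)) by (apply Rabs_pos_lt; auto).
  destruct (Hc (Rabs (phi x0)) He) as [alp [Ha Hp]].
  set (t := Rmin (1/2) (alp/2)).
  assert (Ht : 0 < t <= 1/2 /\ t <= alp / 2).
  { unfold t. split. split. apply Rmin_pos; lra. apply Rmin_l. apply Rmin_r. }
  set (y := x0 + t * (1/2 - x0)).
  assert (Hy : 0 < y < 1) by (unfold y; destruct Hx; subst; lra).
  specialize (Hp y). simpl in Hp. unfold R_dist, D_x, no_cond in Hp.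
  rewrite Hz in Hp by auto. replace (0 - phi x0) with (- phi x0) in Hp by ring. rewrite Rabs_Ropp in Hp.
  assert (Rabs (y - x0) < alp).
  { unfold y. replace (x0 + t * (1 / 2 - x0) - x0) with (t * (1/2 - x0)) by ring.
    rewrite Rabs_mult. rewrite Rabs_pos_eq by lra. destruct Hx; subst.
    - rewrite Rabs_pos_eq by lra. lra.
    - rewrite Rabs_left by lra. lra. }
  assert (x0 <> y) by (unfold y; destruct Hx; subst; lra).
  specialize (Hp (conj (conj I H0) H)). lra.
Qed.

Lemma sum_zero (a : nat -> R) N : (forall n, a n = 0) -> sum_f_R0 a N = 0.
Proof. intros Ha. induction N; simpl. apply Ha. rewrite IHN, Ha. ring. Qed.

Lemma inf_sum_zero (a : nat -> R) : (forall n, a n = 0) -> infinite_sum a 0.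
Proof.
  intros Ha eps He. exists O. intros n _. unfold R_dist. rewrite sum_zero by auto.
  rewrite Rminus_0_r, Rabs_R0. auto.
Qed.

Lemma near_h y d : 0 < y < 1 -> 0 < d -> exists h, h <> 0 /\ 0 < y + h < 1 /\ Rabs h < d.
Proof.
  intros Hy Hd. exists (Rmin (d/2) ((1-y)/2)).
  assert (0 < Rmin (d/2) ((1-y)/2)) by (apply Rmin_pos; lra).
  pose proof (Rmin_l (d/2) ((1-y)/2)). pose proof (Rmin_r (d/2) ((1-y)/2)).
  split. lra. split. lra. rewrite Rabs_pos_eq; lra.
Qed.

Lemma Lop_zero s W u H : Leaver_qnf s W u H -> good (cre H) -> good (cim H) ->
  (forall x, 0 <= x <= 1 -> Dt (cre H) (cim H) 0 x = u x) ->
  forall x, 0 <= x <= 1 -> Lop s W (Dt (cre H) (cim H)) x = C0.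
Proof.
  intros [_ [_ [[u1 [u2 Hode]] _]]] Hr Hi HD0.
  set (D := Dt (cre H) (cim H)).
  assert (Hint : forall x, 0 < x < 1 -> Lop s W D x = C0).
  { assert (E1 : forall y, 0 < y < 1 -> u1 y = D 1%nat y).
    { intros y Hy. destruct (Hode y Hy) as [Dy _].
      apply (deriv_unique u (D O) y). 
      - intros d Hd. destruct (near_h y d Hy Hd) as [h [Hh [Hyh Hhd]]]. exists h. split; auto. split. lra. split; auto.
        symmetry. apply HD0. lra.
      - symmetry; apply HD0; lra.
      - auto.
      - apply Dt_deriv; auto. lra. }
    assert (E2 : forall y, 0 < y < 1 -> u2 y = D 2%nat y).
    { intros y Hy. destruct (Hode y Hy) as [_ [Dy _]].
      apply (deriv_unique u1 (D 1%nat) y). 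
      - intros d Hd. destruct (near_h y d Hy Hd) as [h [Hh [Hyh Hhd]]]. exists h. split; [auto|]. split; [lra|]. split; [auto|].
        apply E1. lra.
      - apply E1; lra.
      - auto.
      - apply Dt_deriv; auto. lra. }
    intros x Hx. destruct (Hode x Hx) as [_ [_ Hz]]. unfold Lop.
    rewrite <- E1, <- E2 by auto. unfold D. rewrite HD0 by lra. exact Hz. }
  intros x Hx.
  destruct (Req_dec x 0) as [H0|H0]; [|destruct (Req_dec x 1) as [H1|H1]].
  3: { apply Hint. destruct Hx as [Hx1 Hx2].
        destruct (Rle_lt_or_eq_dec 0 x Hx1); [|congruence]. destruct (Rle_lt_or_eq_dec x 1 Hx2); [|congruence]. lra. }
  all: destruct (Ccont_Lop s W (cre H) (cim H) x Hr Hi) as [Cr Ci].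
  all: assert (Zr : Re (Lop s W D x) = 0) by
      (apply (zero_end (fun y => Re (Lop s W D y))); auto; intros y Hy; rewrite Hint; auto).
  all: assert (Zi : Im (Lop s W D x) = 0) by
      (apply (zero_end (fun y => Im (Lop s W D y))); auto; intros y Hy; rewrite Hint; auto).
  all: fold D; destruct (Lop s W D x) as [a b]; unfold Re, Im in *; simpl in *; subst; reflexivity.
Qed.

Lemma zero_tower_ok sg j : seminorm_finite sg j (fun _ _ => C0).
Proof.
  exists (fun _ => 0), 0. split.
  - intros n. replace (fun x => (x / sg) ^ j * Cnorm2 C0) with (fct_cte 0).
    exists (RiemannInt_P14 0 1 0). rewrite RiemannInt_P15. ring.
    apply functional_extensionality. intros x. unfold fct_cte, Cnorm2, C0, Re, Im. simpl. ring.
  - intros N. rewrite sum_zero. lra. intros n. ring.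
Qed.

Theorem mainTheorem18 :
  forall (W : list Cpx) (sigma : R) (s : Cpx) (u : R -> Cpx) (H : nat -> Cpx),
    0 < sigma ->
    Leaver_qnf s W u H ->
    sigma < (Re (Csqrt s)) ^ 2 ->
    (exists x, 0 < x < 1 /\ u x <> C0) ->
    InX sigma u /\
    (Omega sigma s ->
       exists D, InX_tower sigma u D /\ InY sigma (Lop s W D) /\
         (forall x, 0 <= x <= 1 -> Lop s W D x = C0) /\
         (exists x, 0 <= x <= 1 /\ u x <> C0)).
Proof.
  intros W sigma s u H Hs Hq Hsig Hnz.
  pose proof Hq as Hq0.
  destruct Hq as [Hres [Hims [Hode [Hser [M HM]]]]].
  set (al := Re (Csqrt s)) in *.
  assert (Hal0 : 0 <= al) by (unfold al, Csqrt, Re; simpl; apply sqrt_pos).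
  assert (Hsq : 0 < sqrt sigma) by (apply sqrt_lt_R0; auto).
  assert (Hsq2 : sqrt sigma * sqrt sigma = sigma) by (apply sqrt_sqrt; lra).
  assert (Hal : sqrt sigma < al).
  { rewrite <- (sqrt_pow2 al Hal0). apply sqrt_lt_1_alt. lra. }
  set (ep := al - sqrt sigma). set (ga := sqrt sigma + al).
  assert (Hep : 0 < ep) by (unfold ep; lra). assert (Hga : 0 < ga) by (unfold ga; lra).
  assert (H4 : 4 * sigma < ga ^ 2) by (unfold ga; nra).
  assert (Hbd : forall (c : nat -> R), c O = 0 -> (forall k, (1 <= k)%nat -> Rabs (c k) <= Cnorm (H k)) ->
             forall m k, Rabs (c k) * INR k ^ m <= (24 * M * INR (fact (2*m)) / (ep^4 * ga^(2*m))) * w k).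
  { intros c Hc0 Hck. apply (c_bound c M al ep ga Hep Hga ltac:(unfold ep, ga; lra) Hc0).
    intros k Hk. eapply Rle_trans; [|apply (leaver_bound s H M k Hk (HM k Hk))].
    apply Rmult_le_compat_r. left; apply exp_pos. fold al. apply Hck; auto. }
  assert (Br : forall m k, Rabs (cre H k) * INR k ^ m <= (24 * M * INR (fact (2*m)) / (ep^4 * ga^(2*m))) * w k).
  { apply Hbd. reflexivity. intros k Hk. destruct k. lia. apply Cnorm_ge_re. }
  assert (Bi : forall m k, Rabs (cim H k) * INR k ^ m <= (24 * M * INR (fact (2*m)) / (ep^4 * ga^(2*m))) * w k).
  { apply Hbd. reflexivity. intros k Hk. destruct k. lia. apply Cnorm_ge_im. }
  assert (Gr : good (cre H)) by (eapply good_of_bound; exact Br).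
  assert (Gi : good (cim H)) by (eapply good_of_bound; exact Bi).
  set (G := 48 * M / ep ^ 4).
  set (B := fun m => G * INR (fact (2 * m)) / ga ^ (2 * m)).
  assert (EB : forall m, 24 * M * INR (fact (2*m)) / (ep^4 * ga^(2*m)) * 2 = B m).
  { intros m. unfold B, G. field. repeat split; try apply pow_nonzero; lra. }
  assert (SBr : forall m, Sb (cre H) m <= B m) by (intros m; rewrite <- EB; apply (Sb_of_bound _ _ Br)).
  assert (SBi : forall m, Sb (cim H) m <= B m) by (intros m; rewrite <- EB; apply (Sb_of_bound _ _ Bi)).
  assert (Hsum : forall j, exists C, forall N, sum_f_R0 (fun n => wcoef sigma n * INR n ^ j * B (S n) ^ 2) N <= C).
  { intros j. apply (sum_bound sigma ga G j Hs Hga H4). }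
  set (D := Dt (cre H) (cim H)).
  assert (HD0 : forall x, 0 <= x <= 1 -> D O x = u x).
  { intros x Hx. unfold D, Dt, Fc. rewrite cl_id by auto.
    rewrite (F0_re H (u x) x (Hser x Hx)), (F0_im H (u x) x (Hser x Hx)).
    unfold Re, Im. destruct (u x); reflexivity. }
  assert (Hu1 : u 1 = C0).
  { rewrite <- HD0 by lra. unfold D, Dt, Fc. rewrite cl_id by lra. unfold C0.
    assert (Z : forall c : nat -> R, c O = 0 -> F c 0 1 = 0).
    { intros c Hc. apply F0_gen; auto. apply inf_sum_zero. intros n. simpl. ring. }
    rewrite !Z; reflexivity. }
  assert (Htow : InX_tower sigma u D).
  { split. split. exact HD0. intros n x Hx. apply Dt_deriv; auto.
    split. exact Hu1.
    split. apply (seminorm_ok _ _ sigma 0 B); auto.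
    split. apply (seminorm_ok _ _ sigma 1 B); auto.
    split. apply (seminorm_ok _ _ sigma 2 B); auto.
    apply (bdry_ok _ _ sigma B); auto. }
  split. exists D; exact Htow.
  intros _. exists D. split. exact Htow.
  assert (HL : forall x, 0 <= x <= 1 -> Lop s W D x = C0) by (apply (Lop_zero s W u H); auto).
  split.
  - exists (fun _ _ => C0). split.
    + split. intros x Hx. symmetry. apply HL; auto.
      intros n x Hx eps He. exists 1. split. lra. intros h _ _ _.
      unfold Cnorm, Cnorm2, Csub, C0, Re, Im. simpl.
      match goal with |- sqrt ?e < _ => replace e with 0 by ring end. rewrite sqrt_0. lra.
    + split. apply zero_tower_ok. split. apply zero_tower_ok.
      exists 0. intros N. rewrite sum_zero. lra. intros n. unfold Cnorm2, C0, Re, Im. simpl. ring.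
  - split. exact HL.
    destruct Hnz as [x [Hx Hux]]. exists x. split. lra. auto.
Qed.
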